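(* Let $\mathcal{I}\subseteq\mathcal{M}_m$ be decreasing and $f,g\in\mathcal{I}$ with $\deg f=\deg g=s\ge2$, $\operatorname{ind}(f)=\{i_1<\dots<i_s\}$ and $\operatorname{ind}(g)=\{j_1<\dots<j_s\}$, such that $i_s>i_{s-1}>j_s$ or $j_s>j_{s-1}>i_s$. Then $$\bigl|\mathrm{LTA}(m,2)\cdot f+\mathrm{LTA}(m,2)\cdot g\bigr|=\bigl|\mathrm{LTA}(m,2)\cdot f\bigr|\cdot\bigl|\mathrm{LTA}(m,2)\cdot g\bigr|.$$
   Context: $\mathcal{M}_m$: square-free monomials in $x_0,\dots,x_{m-1}$ in $\mathbf{R}_m=\mathbb{F}_2[x_0,\dots,x_{m-1}]/(x_i^2-x_i)$; $\operatorname{ind}(u)$ the variable indices, $\deg u=|\operatorname{ind}u|$. For equal-degree monomials with increasing indices, $u\preceq_{sh}v$ iff componentwise $\le$; $u\preceq v$ iff $u\preceq_{sh}v^*\mid v$ for some $v^*$; $\mathcal{I}$ decreasing if $f\in\mathcal{I}$, $g\preceq f\Rightarrow g\in\mathcal{I}$. $\mathrm{LTA}(m,2)$: pairs $(\mathbf{B},\varepsilon)$ with $\mathbf{B}=(b_{i,j})$ binary lower unitriangular $m\times m$ and $\varepsilon\in\mathbb{F}_2^m$, acting on monomial $u$ by $x_i\mapsto x_i+\sum_{j<i}b_{i,j}x_j+\varepsilon_i$ for $i\in\operatorname{ind}u$; $\mathrm{LTA}(m,2)\cdot f$ is the orbit (set of polynomials). $A+B=\{a+b:a\in A,b\in B\}$.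 *)

(* Defs.v *)
From HB Require Import structures.
From mathcomp Require Import all_boot all_order all_algebra.
Set Implicit Arguments. Unset Strict Implicit. Unset Printing Implicit Defensive.

(* R_m = F_2[x_0..x_{m-1}]/(x_i^2 - x_i) has the F_2-basis of square-free
   monomials.  A square-free monomial u is represented by its index set
   ind(u) : {set 'I_m}; a polynomial of R_m by its (finite) set of monomials
   with coefficient 1. *)
Definition monom (m : nat) := {set 'I_m}.
Definition rpoly (m : nat) := {set {set 'I_m}}.

Definition padd m (P Q : rpoly m) : rpoly m := (P :\: Q) :|: (Q :\: P).

(* product in R_m : monomials multiply by union of index sets (x_i^2 = x_i),
   coefficients are summed mod 2 *)
Definition pmul m (P Q : rpoly m) : rpoly m :=
  [set w : {set 'I_m} |
     odd #|[set uv in setX P Q | uv.1 :|: uv.2 == w]| ].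

Definition pone m : rpoly m := [set set0].

Definition ind m (u : monom m) : seq nat := sort leq [seq val i | i <- enum u].

Definition sh_le m (u v : monom m) : bool :=
  (#|u| == #|v|) && all2 leq (ind u) (ind v).

Definition mon_le m (u v : monom m) : bool :=
  [exists vs : {set 'I_m}, (vs \subset v) && sh_le u vs].

Definition decreasing m (I : {set monom m}) : Prop :=
  forall f g : monom m, f \in I -> mon_le g f -> g \in I.

Definition lower_unitri m (B : 'M['F_2]_m) : bool :=
  [forall i : 'I_m, B i i == 1%R] && [forall i : 'I_m, forall j : 'I_m, (i < j)%N ==> (B i j == 0%R)].

(* image of x_i : x_i + sum_{j<i} b_{ij} x_j + eps_i *)
Definition aff_form m (B : 'M['F_2]_m) (e : 'rV['F_2]_m) (i : 'I_m) : rpoly m :=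
  [set [set i]] :|: [set [set j] | j : 'I_m & (j < i)%N && (B i j == 1%R)]
    :|: (if e ord0 i == 1%R then [set set0] else set0).

Definition lta_act m (B : 'M['F_2]_m) (e : 'rV['F_2]_m) (u : monom m) : rpoly m :=
  foldr (@pmul m) (pone m) [seq aff_form B e i | i <- enum u].

Definition lta_orbit m (u : monom m) : {set rpoly m} :=
  [set lta_act p.1 p.2 u |
     p in [set p : 'M['F_2]_m * 'rV['F_2]_m | lower_unitri p.1]].

Definition sumset m (A B : {set rpoly m}) : {set rpoly m} :=
  [set padd a b | a in A, b in B].

(* Main.v *)
Require Import Defs.
From mathcomp Require Import all_boot all_order all_algebra.
From mathcomp Require Import zify.
Set Implicit Arguments. Unset Strict Implicit.

Section Ev.
Variable m : nat.
Implicit Types (P Q : rpoly m) (x : {set 'I_m}).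

Definition ev P x : bool := odd #|[set w in P | w \subset x]|.

Lemma card_sumb (T : finType) (A : {set T}) : #|A| = \sum_i ((i \in A) : nat).
Proof. by rewrite -sum1_card big_mkcond /=; apply: eq_bigr => i _; case: (i \in A). Qed.

Lemma odd_sum_eq (T : finType) (F G : T -> nat) :
  (forall i, odd (F i) = odd (G i)) -> odd (\sum_i F i) = odd (\sum_i G i).
Proof.
move=> H; apply: (big_ind2 (fun a b => odd a = odd b)) => //.
  by move=> a b c d E1 E2; rewrite !oddD E1 E2.
Qed.

Lemma odd_padd (T : finType) (A B : {set T}) :
  odd #|(A :\: B) :|: (B :\: A)| = odd #|A| (+) odd #|B|.
Proof.
rewrite cardsU.
have -> : (A :\: B) :&: (B :\: A) = set0 :> {set T}.
  by apply/setP => w; rewrite !inE; case: (w \in A); case: (w \in B).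
rewrite cards0 subn0 oddD !cardsD.
rewrite !oddB ?subset_leq_card ?subsetIl ?subsetIr // setIC.
by case: (odd #|A|); case: (odd #|B|); case: (odd _).
Qed.

Lemma ev_padd P Q x : ev (padd P Q) x = ev P x (+) ev Q x.
Proof.
rewrite /ev -odd_padd; congr odd; apply: eq_card => w; rewrite !inE.
by case: (w \in P); case: (w \in Q); case: (w \subset x).
Qed.

Lemma ev_pmul P Q x : ev (pmul P Q) x = ev P x && ev Q x.
Proof.
rewrite /ev card_sumb.
pose N w := \sum_(uv : {set 'I_m} * {set 'I_m})
   (((uv.1 \in P) && (uv.2 \in Q) && (uv.1 :|: uv.2 == w)) : nat).
transitivity (odd (\sum_(w : {set 'I_m}) (((w \subset x) : nat) * N w))).
  apply: odd_sum_eq => w; rewrite !inE /N.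
  rewrite [X in odd (odd X && _)]card_sumb.
  under eq_bigr => uv _ do rewrite !inE.
  by case: (w \subset x); rewrite ?andbT ?andbF ?mul1n ?mul0n ?oddb.
transitivity (odd (\sum_(uv : {set 'I_m} * {set 'I_m})
   (((uv.1 \in P) && (uv.2 \in Q) && (uv.1 \subset x) && (uv.2 \subset x)) : nat))).
  congr odd; rewrite /N.
  under eq_bigr => w _ do rewrite big_distrr /=.
  rewrite exchange_big /=; apply: eq_bigr => uv _.
  rewrite (bigD1 (uv.1 :|: uv.2)) //= eqxx andbT big1 ?addn0.
    by rewrite subUset; case: (uv.1 \in P); case: (uv.2 \in Q); rewrite /= ?muln0 ?muln1 ?andbF.
  by move=> w /negbTE; rewrite eq_sym => ->; rewrite andbF muln0.
rewrite -oddM -cardsX card_sumb; congr odd; apply: eq_bigr => uv _; rewrite !inE.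
by case: (uv.1 \in P); case: (uv.2 \in Q); case: (uv.1 \subset x).
Qed.


Lemma ev_pone x : ev (pone m) x.
Proof.
rewrite /ev (_ : [set w in pone m | w \subset x] = [set set0]) ?cards1 //.
by apply/setP => w; rewrite !inE; case: eqP => // ->; rewrite sub0set.
Qed.

Lemma ev_inj P Q : (forall x, ev P x = ev Q x) -> P = Q.
Proof.
move=> H.
have R0 : forall x, ev (padd P Q) x = false by move=> x; rewrite ev_padd H addbb.
case: (set_0Vmem (padd P Q)) => [E | [w0 Hw0]].
  apply/setP => w; have : w \in padd P Q = false by rewrite E inE.
  rewrite /padd !inE /=.
  by case: (w \in P); case: (w \in Q).
case: (arg_minnP (fun w : {set 'I_m} => #|w|) Hw0) => w Hw Hmin.
have := R0 w; rewrite /ev (_ : [set w' in padd P Q | w' \subset w] = [set w]) ?cards1 //.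
have Hw' : w \in padd P Q := Hw.
apply/setP => w'; rewrite in_set in_set1.
apply/andP/eqP => [[H1 H2] | ->]; last by rewrite subxx.
by apply/eqP; rewrite eqEcard H2 Hmin.
Qed.

Definition lowlt k P := forall w, w \in P -> forall t : 'I_m, t \in w -> t < k.

Lemma ev_low k P x x' : lowlt k P -> (forall t : 'I_m, t < k -> (t \in x) = (t \in x')) ->
  ev P x = ev P x'.
Proof.
move=> HP Hx; rewrite /ev; congr odd; apply: eq_card => w; rewrite !inE.
case wP: (w \in P) => //=.
apply/subsetP/subsetP => Hs t tw.
  by rewrite -Hx ?(HP w wP t tw) ?Hs.
by rewrite Hx ?(HP w wP t tw) ?Hs.
Qed.

Lemma lowlt_pone k : lowlt k (pone m).
Proof. by move=> w; rewrite inE => /eqP -> t; rewrite inE. Qed.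

Lemma lowlt_pmul k P Q : lowlt k P -> lowlt k Q -> lowlt k (pmul P Q).
Proof.
move=> HP HQ w; rewrite inE => Hodd.
have : 0 < #|[set uv in setX P Q | uv.1 :|: uv.2 == w]|.
  by case: (posnP #|_|) Hodd => // ->.
rewrite card_gt0 => /set0Pn [[u v]]; rewrite !inE /= => /andP [/andP [uP vQ] /eqP <-] t.
by rewrite inE => /orP [] Ht; [apply: HP uP t Ht | apply: HQ vQ t Ht].
Qed.

Lemma lowlt_mono k k' P : k <= k' -> lowlt k P -> lowlt k' P.
Proof. by move=> kk H w wP t tw; apply: leq_trans (H w wP t tw) kk. Qed.

Definition flip x (t : 'I_m) := if t \in x then x :\ t else t |: x.

Lemma in_flip x (t u : 'I_m) : (u \in flip x t) = if u == t then t \notin x else u \in x.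
Proof.
rewrite /flip; case: ifP => tx; rewrite !inE; case: eqP => // ->; by rewrite tx.
Qed.

Lemma ev_flip k P x (t : 'I_m) : lowlt k P -> k <= t -> ev P (flip x t) = ev P x.
Proof.
move=> HP kt; apply: ev_low HP _ => u uk; rewrite in_flip.
case: eqP => // E; by rewrite E ltnNge kt in uk.
Qed.


Section Aff.
Variables (B : 'M['F_2]_m) (e : 'rV['F_2]_m).

Definition affT (i : 'I_m) : rpoly m :=
  [set [set j] | j : 'I_m & (j < i)%N && (B i j == 1%R)]
    :|: (if e ord0 i == 1%R then [set set0] else set0).

Lemma lowlt_affT (i : 'I_m) : lowlt i (affT i).
Proof.
move=> w; rewrite !inE => /orP [/imsetP [j] | ].
  by rewrite inE => /andP [ji _] -> t; rewrite inE => /eqP ->.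
by case: ifP; rewrite ?inE // => _ /eqP -> t; rewrite inE.
Qed.

Lemma aff_padd (i : 'I_m) : aff_form B e i = padd [set [set i]] (affT i).
Proof.
have Hn : [set i] \notin affT i.
  apply/negP => /lowlt_affT /(_ i); rewrite inE eqxx ltnn.
  by move=> H; have := H isT.
apply/setP => w; rewrite /aff_form /padd -setUA -/(affT i) !inE.
case: eqP => [-> | _]; first by move: Hn; rewrite /affT inE => /negbTE ->.
by rewrite andbF /=.
Qed.

Lemma ev_single (i : 'I_m) x : ev [set [set i]] x = (i \in x).
Proof.
rewrite /ev; case ix: (i \in x).
  rewrite (_ : [set w in [set [set i]] | w \subset x] = [set [set i]]) ?cards1 //.
  apply/setP => w; rewrite !inE; case: eqP => // ->; by rewrite sub1set ix.
rewrite (_ : [set w in [set [set i]] | w \subset x] = set0) ?cards0 //.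
apply/setP => w; rewrite !inE; case: eqP => // ->; by rewrite sub1set ix.
Qed.

Lemma lowlt_aff (i : 'I_m) : lowlt i.+1 (aff_form B e i).
Proof.
rewrite aff_padd => w; rewrite /padd in_setU !in_setD in_set1 => /orP [/andP [_ /eqP ->] t | /andP [_ H] t tw].
  by rewrite inE => /eqP ->.
by apply: ltnW; apply: lowlt_affT H t tw.
Qed.

Lemma ev_aff_flip (i : 'I_m) x : ev (aff_form B e i) (flip x i) = ~~ ev (aff_form B e i) x.
Proof.
rewrite !aff_padd !ev_padd !ev_single in_flip eqxx (ev_flip x (@lowlt_affT i) (leqnn i)).
by case: (i \in x); case: (ev _ _).
Qed.

Lemma ev_act (u : monom m) x : ev (lta_act B e u) x = [forall i in u, ev (aff_form B e i) x].
Proof.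
rewrite /lta_act.
have -> : forall s, ev (foldr (@pmul m) (pone m) [seq aff_form B e i | i <- s]) x
     = all (fun i => ev (aff_form B e i) x) s.
  by elim => [|a s IH] /=; rewrite ?ev_pone // ev_pmul IH.
apply/allP/forall_inP => H i; [rewrite -mem_enum | rewrite mem_enum]; exact: H.
Qed.

Lemma lowlt_act (u : monom m) k : (forall i, i \in u -> i < k) -> lowlt k (lta_act B e u).
Proof.
move=> H; rewrite /lta_act.
have : forall i, i \in enum u -> i < k by move=> i; rewrite mem_enum; exact: H.
elim: (enum u) => [|a s IH] Hs /=; first exact: lowlt_pone.
apply: lowlt_pmul; last by apply: IH => i iS; apply: Hs; rewrite inE iS orbT.
exact: (lowlt_mono (Hs a (mem_head a s)) (@lowlt_aff a)).
Qed.

End Aff.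

End Ev.

Section Ind.
Variable m : nat.
Implicit Types (u : monom m).

Lemma ind_size u : size (ind u) = #|u|.
Proof. by rewrite /ind size_sort size_map cardE. Qed.

Lemma ind_sorted u : sorted leq (ind u).
Proof. exact: (sort_sorted leq_total). Qed.

Lemma ind_mem u (t : 'I_m) : (val t \in ind u) = (t \in u).
Proof. by rewrite /ind mem_sort (mem_map val_inj) mem_enum. Qed.

Lemma ind_nth_in u k : k < #|u| -> exists2 t : 'I_m, t \in u & val t = nth 0 (ind u) k.
Proof.
move=> Hk; have : nth 0 (ind u) k \in ind u by rewrite mem_nth // ind_size.
rewrite /ind mem_sort => /mapP [t]; rewrite mem_enum => tu E.
by exists t; rewrite // /ind E.
Qed.

Lemma ind_pos u (t : 'I_m) : t \in u -> exists2 p, p < #|u| & nth 0 (ind u) p = val t.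
Proof.
rewrite -ind_mem => H; exists (index (val t) (ind u)); last exact: nth_index.
by rewrite -ind_size index_mem.
Qed.

Lemma ind_mono u p q : p <= q -> q < #|u| -> nth 0 (ind u) p <= nth 0 (ind u) q.
Proof.
move=> pq qs; apply: (sorted_leq_nth leq_trans leqnn 0 (ind_sorted u)) => //;
by rewrite inE ind_size; lia.
Qed.

Lemma ind_top u (t : 'I_m) : t \in u -> val t <= nth 0 (ind u) #|u|.-1.
Proof.
move=> /ind_pos [p ps <-]; apply: ind_mono; lia.
Qed.

Lemma ind_second u (t : 'I_m) : t \in u -> val t != nth 0 (ind u) #|u|.-1 ->
  val t <= nth 0 (ind u) #|u|.-2.
Proof.
move=> /ind_pos [p ps <-] Hne.
have : p != #|u|.-1 by apply: contra Hne => /eqP ->.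
move=> H; apply: ind_mono; lia.
Qed.

End Ind.

Section Key.
Variables (m : nat) (f g : monom m) (y z : 'I_m) (js : nat).
Hypotheses (yf : y \in f) (zf : z \in f) (zy : z < y)
  (Hf : forall t, t \in f -> t != y -> t <= z)
  (Hg : forall t : 'I_m, t \in g -> t <= js) (jz : js < z).

Definition AF B e x := [forall i in f, (i != y) ==> ev (aff_form B e i) x].
Definition A0 B e x := [forall i in f, (i != y) ==> (i != z) ==> ev (aff_form B e i) x].

Lemma Fflip B e (i t : 'I_m) x : i < t -> ev (aff_form B e i) (flip x t) = ev (aff_form B e i) x.
Proof. by move=> it; apply: ev_flip (@lowlt_aff _ B e i) _. Qed.

Lemma L1 B e x : ev (lta_act B e f) x = ev (aff_form B e y) x && AF B e x.
Proof.
rewrite ev_act /AF; apply/forall_inP/andP => [H | [Hy H] i iF].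
  split; first exact: H.
  by apply/forall_inP => i iF; apply/implyP => _; apply: H.
by case: (eqVneq i y) => [-> // | ne]; move/forall_inP: H => /(_ i iF); rewrite ne.
Qed.

Lemma L2 B e x : AF B e (flip x y) = AF B e x.
Proof.
rewrite /AF; apply: eq_forallb => i; case iF: (i \in f) => //=.
case: (eqVneq i y) => //= ne; rewrite Fflip //.
have := Hf iF ne; lia.
Qed.

Lemma L3 B e x : AF B e x = ev (aff_form B e z) x && A0 B e x.
Proof.
have zy' : z != y by rewrite neq_ltn zy.
rewrite /AF /A0; apply/forall_inP/andP => [H | [Hz H] i iF].
  split; first by have := H z zf; rewrite zy'.
  by apply/forall_inP => i iF; apply/implyP => ne; apply/implyP => _;
     have := H i iF; rewrite ne.
apply/implyP => ne; case: (eqVneq i z) => [-> // | nz].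
by move/forall_inP: H => /(_ i iF); rewrite ne nz.
Qed.

Lemma L4 B e x : A0 B e (flip x z) = A0 B e x.
Proof.
rewrite /A0; apply: eq_forallb => i; case iF: (i \in f) => //=.
case: (eqVneq i y) => //= ne; case: (eqVneq i z) => //= nz; rewrite Fflip //.
have H1 := Hf iF ne; have H2 : (i : nat) != z by []; have H3 : (i : nat) < z by rewrite ltn_neqAle H1 H2. lia.
Qed.

Lemma L5 B e x : AF B e x && AF B e (flip x z) = false.
Proof.
rewrite !L3 L4 ev_aff_flip.
by case: (ev _ _); case: (A0 _ _ _).
Qed.

Lemma key B e B' e' C c C' c' :
  padd (lta_act B e f) (lta_act C c g) = padd (lta_act B' e' f) (lta_act C' c' g) ->
  lta_act B e f = lta_act B' e' f.
Proof.
move=> Heq; apply: ev_inj => x.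
have Hb : forall x (t : 'I_m), js < t ->
   ev (lta_act C c g) (flip x t) (+) ev (lta_act C' c' g) (flip x t) =
   ev (lta_act C c g) x (+) ev (lta_act C' c' g) x.
  move=> x0 t jt.
  have Hl : forall (D : 'M['F_2]_m) d, lowlt js.+1 (lta_act D d g).
    by move=> D d; apply: lowlt_act => i ig; have := Hg ig; lia.
  by rewrite !(ev_flip x0 (Hl _ _)).
have HD : forall x, ev (lta_act B e f) x (+) ev (lta_act B' e' f) x =
   ev (lta_act C c g) x (+) ev (lta_act C' c' g) x.
  move=> x0; have := congr1 (fun P => ev P x0) Heq; rewrite /= !ev_padd.
  by case: (ev _ _); case: (ev _ _); case: (ev _ _); case: (ev _ _).
have HDy : forall x, ev (lta_act B e f) (flip x y) (+) ev (lta_act B' e' f) (flip x y) =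
   ev (lta_act B e f) x (+) ev (lta_act B' e' f) x.
  by move=> x0; rewrite !HD Hb //; lia.
have HDz : forall x, ev (lta_act B e f) (flip x z) (+) ev (lta_act B' e' f) (flip x z) =
   ev (lta_act B e f) x (+) ev (lta_act B' e' f) x.
  by move=> x0; rewrite !HD Hb //; lia.
have AA : forall x, AF B e x = AF B' e' x.
  move=> x0; have := HDy x0; rewrite !L1 !L2 !ev_aff_flip.
  by case: (ev (aff_form B e y) x0); case: (ev (aff_form B' e' y) x0);
     case: (AF B e x0); case: (AF B' e' x0).
have Dle : forall x, ev (lta_act B e f) x (+) ev (lta_act B' e' f) x -> AF B e x.
  by move=> x0; rewrite !L1 -AA; case: (AF B e x0); rewrite ?andbF.
have : ev (lta_act B e f) x (+) ev (lta_act B' e' f) x = false.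
  apply/negP => H; have := L5 B e x; rewrite Dle // Dle //.
  by rewrite HDz.
by case: (ev _ _); case: (ev _ _).
Qed.

End Key.

Lemma paddC m (P Q : rpoly m) : padd P Q = padd Q P.
Proof. by rewrite /padd setUC. Qed.

Lemma padd_cancel m (a b a' b' : rpoly m) : padd a b = padd a' b' -> a = a' -> b = b'.
Proof.
move=> E Ea; apply: ev_inj => x; have := congr1 (fun P => ev P x) E.
by rewrite /= !ev_padd Ea; case: (ev _ _); case: (ev _ _); case: (ev _ _).
Qed.

Lemma key_wrap m (f g : monom m) s : #|f| = s -> #|g| = s -> 2 <= s ->
  nth 0 (ind f) s.-2 < nth 0 (ind f) s.-1 -> nth 0 (ind g) s.-1 < nth 0 (ind f) s.-2 ->
  forall B e B' e' C c C' c',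
  padd (lta_act B e f) (lta_act C c g) = padd (lta_act B' e' f) (lta_act C' c' g) ->
  lta_act B e f = lta_act B' e' f.
Proof.
move=> cf cg s2 H1 H2 B e B' e' C c C' c'.
have [y yf Ey] : exists2 t : 'I_m, t \in f & val t = nth 0 (ind f) s.-1
  by apply: ind_nth_in; lia.
have [z zf Ez] : exists2 t : 'I_m, t \in f & val t = nth 0 (ind f) s.-2
  by apply: ind_nth_in; lia.
apply: (key (y:=y) (z:=z) (js := nth 0 (ind g) s.-1) yf zf).
- by rewrite Ey Ez.
- move=> t tf ne; rewrite Ez -cf; apply: ind_second => //.
  by rewrite cf -Ey.
- by move=> t tg; rewrite -cg; apply: ind_top.
- by rewrite Ez.
Qed.

Theorem mainTheorem11 (m : nat) (I : {set monom m}) (f g : monom m) (s : nat) :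
  decreasing I -> f \in I -> g \in I ->
  #|f| = s -> #|g| = s -> 2 <= s ->
  (let i_ k := nth 0 (ind f) k.-1 in
   let j_ k := nth 0 (ind g) k.-1 in
   [&& i_ s.-1 < i_ s & j_ s < i_ s.-1] || [&& j_ s.-1 < j_ s & i_ s < j_ s.-1]) ->
  #|sumset (lta_orbit f) (lta_orbit g)| = #|lta_orbit f| * #|lta_orbit g|.
Proof.
move=> _ _ _ cf cg s2 /= Hc.
rewrite /sumset curry_imset2X -cardsX; apply: card_in_imset.
move=> [a b] [a' b']; rewrite !inE /= => /andP [ha hb] /andP [ha' hb'] E.
move: ha hb ha' hb' E => /imsetP [[B e] _ ->] /imsetP [[C c] _ ->]
  /imsetP [[B' e'] _ ->] /imsetP [[C' c'] _ ->] /= E.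
case/orP: Hc => /andP [H1 H2].
  have Ea := key_wrap cf cg s2 H1 H2 E.
  by rewrite Ea (padd_cancel E Ea).
rewrite paddC [padd (lta_act B' _ _) _]paddC in E.
have Eb := key_wrap cg cf s2 H1 H2 E.
by rewrite Eb (padd_cancel E Eb).
Qed.
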